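(* If a Lindelöf $P$-space $X$ is homeomorphic to a subspace of a separable Hausdorff space, then $w(X)\leq\mathfrak c$.
   Context: A space is a $P$-space if every $G_\delta$-subset is open. $w$ weight, $\mathfrak c=2^\omega$. *)

(* Defs.v *)
From Stdlib Require Import Classical.

Set Implicit Arguments.

Record Topology (X : Type) := {
  open : (X -> Prop) -> Prop;
  open_full : open (fun _ => True);
  open_inter : forall U V, open U -> open V -> open (fun x => U x /\ V x);
  open_union : forall F : (X -> Prop) -> Prop,
      (forall U, F U -> open U) -> open (fun x => exists U, F U /\ U x)
}.

Definition countable_set (A : Type) (D : A -> Prop) : Prop :=
  exists f : nat -> option A, forall a, D a -> exists n, f n = Some a.

Definition lindelof (X : Type) (T : Topology X) : Prop :=
  forall C : (X -> Prop) -> Prop,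
    (forall U, C U -> open T U) ->
    (forall x, exists U, C U /\ U x) ->
    exists D : (X -> Prop) -> Prop,
      (forall U, D U -> C U) /\ countable_set D /\
      (forall x, exists U, D U /\ U x).

Definition P_space (X : Type) (T : Topology X) : Prop :=
  forall U : nat -> (X -> Prop), (forall n, open T (U n)) ->
    open T (fun x => forall n, U n x).

Definition hausdorff (X : Type) (T : Topology X) : Prop :=
  forall x y : X, x <> y ->
    exists U V, open T U /\ open T V /\ U x /\ V y /\
      (forall z, ~ (U z /\ V z)).

Definition separable (X : Type) (T : Topology X) : Prop :=
  exists D : X -> Prop, countable_set D /\
    (forall U, open T U -> (exists x, U x) -> exists x, U x /\ D x).

Definition embedding (X Y : Type) (TX : Topology X) (TY : Topology Y)
    (f : X -> Y) : Prop :=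
  (forall x1 x2, f x1 = f x2 -> x1 = x2) /\
  (forall V, open TY V -> open TX (fun x => V (f x))) /\
  (forall U, open TX U -> exists V, open TY V /\ forall x, U x <-> V (f x)).

Definition is_base (X : Type) (T : Topology X) (B : (X -> Prop) -> Prop) : Prop :=
  (forall b, B b -> open T b) /\
  (forall U x, open T U -> U x -> exists b, B b /\ b x /\ (forall y, b y -> U y)).

(* w(X) <= c = 2^omega: X has a base of cardinality at most that of nat -> bool. *)
Definition weight_le_c (X : Type) (T : Topology X) : Prop :=
  exists B : (X -> Prop) -> Prop, is_base T B /\
    exists e : (X -> Prop) -> (nat -> bool),
      forall b1 b2, B b1 -> B b2 -> e b1 = e b2 -> b1 = b2.

(* Main.v *)
Require Import Defs.
From Stdlib Require Import Classical ClassicalEpsilon FunctionalExtensionality PropExtensionality Cantor.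
Set Implicit Arguments.

Section S.
Variables (X Y : Type) (TX : Topology X) (TY : Topology Y) (f : X -> Y).
Variable g : nat -> option Y.

Definition subsetA (sn : nat -> bool) : Y -> Prop :=
  fun d => exists k, g k = Some d /\ sn k = true.

Definition FW (A : Y -> Prop) : (Y -> Prop) -> Prop :=
  fun W => open TY W /\ forall z, W z -> forall O, open TY O -> O z -> exists d, O d /\ A d.

Definition GA (sn : nat -> bool) : X -> Prop :=
  fun x => (fun y => exists W, FW (subsetA sn) W /\ W y) (f x).

Definition Bs (s : nat -> nat -> bool) : X -> Prop :=
  fun x => forall n, GA (s n) x.

End S.

Theorem theorem5 (X : Type) (TX : Topology X) (Y : Type) (TY : Topology Y) :
  lindelof TX -> P_space TX ->
  hausdorff TY -> separable TY ->
  (exists f : X -> Y, embedding TX TY f) ->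
  weight_le_c TX.
Proof.
  intros HL HP HH [Dy [[g Hg] HDy]] [f [Hinj [Hpre Himg]]].
  assert (GAopen : forall sn, open TX (GA TY f g sn)).
  { intro sn. unfold GA. apply (Hpre (fun y => exists W, FW TY (subsetA g sn) W /\ W y)). apply open_union. intros W [HW _]. exact HW. }
  assert (Bsopen : forall s, open TX (Bs TY f g s)).
  { intro s. apply HP. intro n. apply GAopen. }
  exists (fun b => exists s, b = Bs TY f g s). split.
  2:{
    exists (fun b => match excluded_middle_informative (exists s, b = Bs TY f g s) with
                  | left H => let s := proj1_sig (constructive_indefinite_description _ H) in
                              fun k => let '(n, m) := Cantor.of_nat k in s n m
                  | right _ => fun _ => true end).
    intros b1 b2 H1 H2 E.
    destruct (excluded_middle_informative _) as [h1|]; [|contradiction].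
    destruct (excluded_middle_informative _) as [h2|]; [|contradiction].
    destruct (constructive_indefinite_description _ h1) as [s1 e1].
    destruct (constructive_indefinite_description _ h2) as [s2 e2]. simpl in E.
    assert (Es : s1 = s2).
    { apply functional_extensionality; intro n; apply functional_extensionality; intro m.
      pose proof (f_equal (fun h => h (Cantor.to_nat (n, m))) E) as E'. cbv beta in E'.
      rewrite Cantor.cancel_of_to in E'; exact E'. }
    subst. reflexivity. }
  split.
  { intros b [s ->]. apply Bsopen. }
  intros U x HU Ux.
  set (C := fun W : X -> Prop => W = U \/ exists x', ~ U x' /\ exists Uy Vy,
            open TY Uy /\ open TY Vy /\ Uy (f x) /\ Vy (f x') /\
            (forall z, ~ (Uy z /\ Vy z)) /\ W = (fun z => Vy (f z))).
  destruct (HL C) as [D [DC [[h Hh] Dcov]]].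
  { intros W [->|[x' [_ [Uy [Vy [_ [HV [_ [_ [_ ->]]]]]]]]]]; [exact HU|]. apply Hpre; exact HV. }
  { intro z. destruct (classic (U z)) as [Uz|nUz].
    - exists U. split; [left; reflexivity|exact Uz].
    - assert (fne : f x <> f z). { intro E. apply Hinj in E. subst. contradiction. }
      destruct (HH _ _ fne) as [Uy [Vy [HUy [HVy [Ux' [Vz Hd]]]]]].
      exists (fun z0 => Vy (f z0)). split; [|exact Vz].
      right. exists z. split; [exact nUz|]. exists Uy, Vy. tauto. }
  assert (Hdense : forall O, open TY O -> forall z, O z -> forall P : Y -> Prop, open TY P -> P z ->
            exists d, O d /\ P d /\ exists k, g k = Some d).
  { intros O HO z Oz P HP' Pz.
    destruct (HDy (fun y => O y /\ P y)) as [d [[Od Pd] Dd]].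
    - apply open_inter; assumption.
    - exists z; tauto.
    - exists d. split; [exact Od|]. split; [exact Pd|]. destruct (Hg d Dd) as [k Hk]. eauto. }
  assert (Hs : forall n, exists sn : nat -> bool, GA TY f g sn x /\
            forall z W, GA TY f g sn z -> h n = Some W -> D W -> W z -> U z).
  { intro n.
    destruct (classic (exists W, h n = Some W /\ D W /\ W <> U)) as [[W [hW [DW WU]]]|nW].
    - destruct (DC W DW) as [->|[x' [_ [Uy [Vy [HUy [HVy [Uyx [_ [Hd ->]]]]]]]]]]; [congruence|].
      exists (fun k => match excluded_middle_informative (exists y, g k = Some y /\ Uy y) with
                  | left _ => true | right _ => false end).
      split.
      + exists Uy. split; [|exact Uyx]. split; [exact HUy|].
        intros z Uz O HO Oz. destruct (Hdense O HO z Oz Uy HUy Uz) as [d [Od [Uyd [k Hk]]]].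
        exists d. split; [exact Od|]. exists k. split; [exact Hk|].
        destruct (excluded_middle_informative _) as [|nn]; [reflexivity|]. exfalso; eauto.
      + intros z W' [W0 [[HW0 Hcl] W0z]] hW' _ Vz. rewrite hW in hW'. injection hW' as <-.
        destruct (Hcl _ W0z Vy HVy Vz) as [d [Vd [k [Hk Hb]]]].
        destruct (excluded_middle_informative _) as [[y [Hy Uyy]]|]; [|discriminate].
        rewrite Hk in Hy. injection Hy as <-. exfalso. exact (Hd d (conj Uyy Vd)).
    - exists (fun _ => true). split.
      + exists (fun _ => True). split; [|exact I]. split; [apply open_full|].
        intros z _ O HO Oz. destruct (Hdense O HO z Oz (fun _ => True) (open_full TY) I) as [d [Od [_ [k Hk]]]].
        exists d. split; [exact Od|]. exists k. split; [exact Hk|reflexivity].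
      + intros z W _ hW DW Wz. destruct (classic (W = U)) as [->|ne]; [exact Wz|].
        exfalso. apply nW. eauto. }
  assert (Hs' : forall n, {sn : nat -> bool | GA TY f g sn x /\
            forall z W, GA TY f g sn z -> h n = Some W -> D W -> W z -> U z}).
  { intro n. apply constructive_indefinite_description. apply Hs. }
  exists (Bs TY f g (fun n => proj1_sig (Hs' n))). split; [eauto|]. split.
  - intro n. exact (proj1 (proj2_sig (Hs' n))).
  - intros z Bz. destruct (Dcov z) as [W [DW Wz]]. destruct (Hh W DW) as [n hn].
    exact (proj2 (proj2_sig (Hs' n)) z W (Bz n) hn DW Wz).
Qed.
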